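(* Let ${\bf D}$ be an $L\times N$ complex matrix with $L=Rd$, $N=Md$, partitioned into consecutive column-blocks ${\bf D}[1],\dots,{\bf D}[M]$ of size $L\times d$ with ${\bf D}^H[\ell]{\bf D}[\ell]={\bf I}_d$ for all $\ell$, and assume ${\bf D}{\bf g}\neq{\bf 0}$ for every nonzero block $2k$-sparse ${\bf g}\in\mathbb{C}^N$. Let ${\bf x}_0\in\mathbb{C}^N$ be block $k$-sparse, ${\bf y}={\bf D}{\bf x}_0$, and let $\mu_{\mathrm B}>0$ be the block-coherence of ${\bf D}$. If $kd<\frac12(\mu_{\mathrm B}^{-1}+d)$, then, running BMP on ${\bf y}$: (1) BMP picks a correct block (a block ${\bf D}[\ell]$ with $\|{\bf x}_0[\ell]\|_2>0$) in each step; (2) the residuals satisfy $\|{\bf r}_\ell\|_2^2\le\beta^\ell\|{\bf r}_0\|_2^2$ for all $\ell\ge0$, where $\beta=1-\frac{1-(k-1)d\mu_{\mathrm B}}{k}$.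
   Context: Vectors in $\mathbb{C}^N$ are viewed as concatenations of consecutive length-$d$ blocks ${\bf x}[1],\dots,{\bf x}[M]$; block $k$-sparse means at most $k$ blocks have nonzero Euclidean norm. $\rho(\cdot)$ is the spectral norm. Block-coherence: $\mu_{\mathrm B}=\max_{\ell,r\neq\ell}\frac1d\rho({\bf D}^H[\ell]{\bf D}[r])$. BMP (block matching pursuit): initialize ${\bf r}_0={\bf y}$; at stage $\ell\ge1$ choose $i_\ell=\arg\max_i\|{\bf D}^H[i]{\bf r}_{\ell-1}\|_2$ and update ${\bf r}_\ell={\bf r}_{\ell-1}-{\bf D}[i_\ell]{\bf D}^H[i_\ell]{\bf r}_{\ell-1}$. *)

(* Defs.v *)
From HB Require Import structures.
From mathcomp Require Import all_boot all_order all_algebra.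
From mathcomp Require Import complex.
From mathcomp Require Import all_classical all_reals.
Set Implicit Arguments. Unset Strict Implicit. Unset Printing Implicit Defensive.
Import Order.TTheory GRing.Theory Num.Theory.
Local Open Scope ring_scope.
Local Open Scope classical_set_scope.

Section BlockDefs.
Variable R : realType.
Local Notation C := R[i].

(* global index of entry j (0-based) of block l (0-based): l*d + j *)
Lemma blk_idx_proof (M d : nat) (l : 'I_M) (j : 'I_d) : (l * d + j < M * d)%N.
Proof.
case: l j => l hl [j hj] /=.
apply: (leq_trans (n := l * d + d)); first by rewrite ltn_add2l.
by rewrite -mulSnr leq_mul2r hl orbT.
Qed.

Definition blk_idx (M d : nat) (l : 'I_M) (j : 'I_d) : 'I_(M * d) :=
  Ordinal (blk_idx_proof l j).

Definition colblk (L M d : nat) (D : 'M[C]_(L, M * d)) (l : 'I_M) : 'M[C]_(L, d) :=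
  \matrix_(i < L, j < d) D i (blk_idx l j).

Definition vblk (M d : nat) (x : 'cV[C]_(M * d)) (l : 'I_M) : 'cV[C]_d :=
  \col_(j < d) x (blk_idx l j) 0.

Definition adjmx (m n : nat) (A : 'M[C]_(m, n)) : 'M[C]_(n, m) :=
  (map_mx (@conjc R) A)^T.

Definition vnorm2 (n : nat) (v : 'cV[C]_n) : R :=
  \sum_(i < n) (ComplexField.Normc.normc (v i 0)) ^+ 2.
Definition vnorm (n : nat) (v : 'cV[C]_n) : R := Num.sqrt (vnorm2 v).

Definition specnorm (m n : nat) (A : 'M[C]_(m, n)) : R :=
  sup [set vnorm (A *m v) | v in [set v : 'cV[C]_n | vnorm v <= 1]].

Definition block_coherence (L M d : nat) (D : 'M[C]_(L, M * d)) : R :=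
  \big[Num.max/0]_(l < M) \big[Num.max/0]_(r < M | r != l)
     ((d%:R)^-1 * specnorm (adjmx (colblk D l) *m colblk D r)).

Definition block_sparse (M d k : nat) (x : 'cV[C]_(M * d)) : Prop :=
  (#|[pred l : 'I_M | vnorm (vblk x l) != 0%R]| <= k)%N.

(* Ties in the argmax may be broken arbitrarily. *)
Definition BMP_run (L M d : nat) (D : 'M[C]_(L, M * d)) (y : 'cV[C]_L)
    (idx : nat -> 'I_M) (r : nat -> 'cV[C]_L) : Prop :=
  r 0%N = y /\
  forall l : nat, (0 < l)%N ->
    (forall i : 'I_M,
        vnorm (adjmx (colblk D i) *m r l.-1)
          <= vnorm (adjmx (colblk D (idx l)) *m r l.-1)) /\
    r l = r l.-1 - colblk D (idx l) *m (adjmx (colblk D (idx l)) *m r l.-1).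

End BlockDefs.

(* Main.v *)
Require Import Defs.
From HB Require Import structures.
From mathcomp Require Import all_boot all_order all_algebra.
From mathcomp Require Import complex.
From mathcomp Require Import all_classical all_reals.
From mathcomp Require Import ring lra.
Import Order.TTheory GRing.Theory Num.Theory.
Local Open Scope ring_scope.
Local Open Scope complex_scope.

Lemma real_CS (R : realFieldType) n (a b : 'I_n -> R) :
  (\sum_i a i * b i) ^+ 2 <= (\sum_i a i ^+ 2) * (\sum_i b i ^+ 2).
Proof.
have E : \sum_i \sum_j (a i * b j - a j * b i) ^+ 2 =
   2 * ((\sum_i a i ^+ 2) * (\sum_i b i ^+ 2) - (\sum_i a i * b i) ^+ 2).
  rewrite (eq_bigr (fun i => \sum_j (a i ^+ 2 * b j ^+ 2 + b i ^+ 2 * a j ^+ 2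
                 - 2 * ((a i * b i) * (a j * b j))))); last first.
    move=> i _; apply: eq_bigr => j _. ring.
  rewrite (eq_bigr (fun i => a i ^+ 2 * (\sum_j b j ^+ 2) + b i ^+ 2 * (\sum_j a j ^+ 2)
                 - 2 * ((a i * b i) * (\sum_j a j * b j)))); last first.
    move=> i _; rewrite sumrB big_split /= !mulr_sumr; congr (_ + _ - _).
    all: try (by apply: eq_bigr => j _; rewrite mulrA).
  rewrite sumrB big_split /= -!mulr_suml -mulr_sumr -mulr_suml; ring.
have : 0 <= \sum_i \sum_j (a i * b j - a j * b i) ^+ 2.
  by apply: sumr_ge0 => i _; apply: sumr_ge0 => j _; exact: sqr_ge0.
rewrite E; lra.
Qed.

Lemma real_CS_sqrt (R : rcfType) n (a b : 'I_n -> R) :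
  (forall i, 0 <= a i) -> (forall i, 0 <= b i) ->
  \sum_i a i * b i <= Num.sqrt (\sum_i a i ^+ 2) * Num.sqrt (\sum_i b i ^+ 2).
Proof.
move=> ha hb.
have h0 : 0 <= \sum_i a i * b i by apply: sumr_ge0 => i _; rewrite mulr_ge0.
rewrite -sqrtrM ?sumr_ge0 // => [|i _]; last by rewrite sqr_ge0.
rewrite -(ger0_norm h0) -sqrtr_sqr; apply: ler_wsqrtr; exact: real_CS.
Qed.


Arguments real_CS_sqrt {R n a b}.

Lemma ar1 (R : realFieldType) (gj gs A B P : R) :
  A <= gs -> gj <= B -> A - B = P -> 0 < P -> gj < gs.
Proof. move=> *; lra. Qed.
Arguments ar1 {R gj gs A B P}.

Section Lib.
Variable R : realType.
Local Notation C := R[i].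
Local Notation nc := (@ComplexField.Normc.normc R).

Lemma nc_ge0 (z : C) : 0 <= nc z.
Proof. by case: z => a b; exact: sqrtr_ge0. Qed.

Lemma ncC (z : C) : `|z| = (nc z)%:C.
Proof. by []. Qed.

Lemma nc_real (x : R) : nc x%:C = `|x|.
Proof. by rewrite /= expr0n /= addr0 sqrtr_sqr. Qed.

Lemma nc_conj (z : C) : nc (z^*)%C = nc z.
Proof. by case: z => a b /=; rewrite sqrrN. Qed.

Lemma ncM (z w : C) : nc (z * w) = nc z * nc w.
Proof. exact: ComplexField.Normc.normcM. Qed.

Lemma nc_sum (I : finType) (P : pred I) (F : I -> C) :
  nc (\sum_(i | P i) F i) <= \sum_(i | P i) nc (F i).
Proof.
rewrite -lecR rmorph_sum /= -ncC.
exact: ler_norm_sum.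
Qed.

Lemma nc_sq (z : C) : ((nc z) ^+ 2)%:C = z * (z^*)%C.
Proof. by rewrite rmorphXn /= -ncC normCK. Qed.

Lemma nc_eq0 (z : C) : nc z = 0 -> z = 0.
Proof. exact: ComplexField.Normc.eq0_normc. Qed.


Lemma adjmxE m n (A : 'M[C]_(m, n)) i j : adjmx A i j = (A j i)^*.
Proof. by rewrite /adjmx !mxE. Qed.

Lemma adjmxM m n p (A : 'M[C]_(m, n)) (B : 'M[C]_(n, p)) :
  adjmx (A *m B) = adjmx B *m adjmx A.
Proof. by rewrite /adjmx map_mxM trmx_mul. Qed.

Lemma adjmxK m n (A : 'M[C]_(m, n)) : adjmx (adjmx A) = A.
Proof. by apply/matrixP => i j; rewrite !adjmxE conjcK. Qed.

Lemma adjmxD m n (A B : 'M[C]_(m, n)) : adjmx (A + B) = adjmx A + adjmx B.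
Proof. by rewrite /adjmx map_mxD linearD. Qed.

Lemma adjmxN m n (A : 'M[C]_(m, n)) : adjmx (- A) = - adjmx A.
Proof. by rewrite /adjmx map_mxN linearN. Qed.

Lemma adjmxB m n (A B : 'M[C]_(m, n)) : adjmx (A - B) = adjmx A - adjmx B.
Proof. by rewrite adjmxD adjmxN. Qed.

Lemma dotE n (u v : 'cV[C]_n) :
  (adjmx u *m v) 0 0 = \sum_i (u i 0)^* * v i 0.
Proof. by rewrite mxE; apply: eq_bigr => i _; rewrite adjmxE. Qed.

Lemma vnorm2_ge0 n (v : 'cV[C]_n) : 0 <= vnorm2 v.
Proof. by apply: sumr_ge0 => i _; rewrite exprn_ge0 ?nc_ge0. Qed.

Lemma vnorm_ge0 n (v : 'cV[C]_n) : 0 <= vnorm v.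
Proof. exact: sqrtr_ge0. Qed.

Lemma vnorm_sq n (v : 'cV[C]_n) : vnorm v ^+ 2 = vnorm2 v.
Proof. by rewrite sqr_sqrtr // vnorm2_ge0. Qed.

Lemma vnorm2C n (v : 'cV[C]_n) : (vnorm2 v)%:C = (adjmx v *m v) 0 0.
Proof.
rewrite dotE rmorph_sum /=; apply: eq_bigr => i _.
by rewrite nc_sq mulrC.
Qed.

Lemma vnorm2_eq0 n (v : 'cV[C]_n) : vnorm2 v = 0 -> v = 0.
Proof.
move=> h; apply/matrixP => i j; rewrite (ord1 j) mxE.
apply: nc_eq0.
have h2 : nc (v i 0) ^+ 2 = 0.
  move: h; rewrite /vnorm2 => /psumr_eq0P; apply => // l _.
  by rewrite exprn_ge0 ?nc_ge0.
by move/eqP: h2; rewrite expf_eq0 /= => /eqP.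
Qed.

Lemma vnorm_eq0 n (v : 'cV[C]_n) : vnorm v = 0 -> v = 0.
Proof. by move=> h; apply: vnorm2_eq0; rewrite -vnorm_sq h expr0n. Qed.

Lemma vnorm2_0 n : vnorm2 (0 : 'cV[C]_n) = 0.
Proof. by apply: big1 => i _; rewrite mxE ComplexField.Normc.normc0 expr0n. Qed.

Lemma vnorm0 n : vnorm (0 : 'cV[C]_n) = 0.
Proof. by rewrite /vnorm vnorm2_0 sqrtr0. Qed.

Lemma vnormZ n (a : C) (v : 'cV[C]_n) : vnorm (a *: v) = nc a * vnorm v.
Proof.
rewrite /vnorm /vnorm2.
rewrite (eq_bigr (fun i => nc a ^+ 2 * nc (v i 0) ^+ 2)); last first.
  by move=> i _; rewrite mxE ncM exprMn.
by rewrite -mulr_sumr sqrtrM ?exprn_ge0 ?nc_ge0 // sqrtr_sqr ger0_norm ?nc_ge0.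
Qed.

Lemma vnormN n (v : 'cV[C]_n) : vnorm (- v) = vnorm v.
Proof.
rewrite -scaleN1r vnormZ.
have -> : nc (-1) = 1 by rewrite -(@rmorphN1 _ _ (real_complex R)) nc_real normrN1.
by rewrite mul1r.
Qed.


Lemma cplx_CS n (u v : 'cV[C]_n) :
  nc ((adjmx u *m v) 0 0) <= vnorm u * vnorm v.
Proof.
rewrite dotE; apply: le_trans (nc_sum _ _ _) _.
rewrite (eq_bigr (fun i => nc (u i 0) * nc (v i 0))); last first.
  by move=> i _; rewrite ncM nc_conj.
exact: real_CS_sqrt (fun i => nc_ge0 _) (fun i => nc_ge0 _).
Qed.

Lemma sq_le (x y : R) : 0 <= y -> x ^+ 2 <= y ^+ 2 -> x <= y.
Proof. move=> hy h; nra. Qed.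

Lemma vnormD n (u v : 'cV[C]_n) : vnorm (u + v) <= vnorm u + vnorm v.
Proof.
apply: sq_le; first by rewrite addr_ge0 ?vnorm_ge0.
rewrite vnorm_sq sqrrD !vnorm_sq.
apply: (@le_trans _ _ (\sum_i (nc (u i 0) + nc (v i 0)) ^+ 2)).
  apply: ler_sum => i _; rewrite mxE.
  rewrite ler_sqr ?nnegrE ?addr_ge0 ?nc_ge0 //; exact: le_normcD.
rewrite (eq_bigr (fun i => nc (u i 0) ^+ 2 + nc (v i 0) ^+ 2 + 2 * (nc (u i 0) * nc (v i 0)))); last first.
  by move=> i _; ring.
rewrite !big_split /= -mulr_sumr.
have := real_CS_sqrt (fun i => nc_ge0 (u i 0)) (fun i => nc_ge0 (v i 0)).
rewrite -/(vnorm2 u) -/(vnorm2 v) -/(vnorm u) -/(vnorm v) => h.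
lra.
Qed.

Lemma vnormB n (u v : 'cV[C]_n) : vnorm (u - v) <= vnorm u + vnorm v.
Proof. by rewrite -(vnormN _ v); exact: vnormD. Qed.

Lemma vnorm_sum n (I : finType) (P : pred I) (F : I -> 'cV[C]_n) :
  vnorm (\sum_(i | P i) F i) <= \sum_(i | P i) vnorm (F i).
Proof.
apply: (big_ind2 (fun x y => vnorm x <= y)); first by rewrite vnorm0.
  by move=> x1 x2 y1 y2 h1 h2; apply: le_trans (vnormD _ _ _) _; exact: lerD.
by [].
Qed.

Lemma nc_le_vnorm n (v : 'cV[C]_n) i : nc (v i 0) <= vnorm v.
Proof.
apply: sq_le; first exact: vnorm_ge0.
rewrite vnorm_sq /vnorm2 (bigD1 i) //= lerDl.
by apply: sumr_ge0 => j _; rewrite exprn_ge0 ?nc_ge0.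
Qed.

Lemma specnorm_ub m n (A : 'M[C]_(m, n)) (v : 'cV[C]_n) :
  vnorm v <= 1 -> vnorm (A *m v) <= specnorm A.
Proof.
move=> hv; apply: ub_le_sup; last by exists v.
exists (Num.sqrt (\sum_i (\sum_j nc (A i j)) ^+ 2)) => _ [w hw <-].
apply: ler_wsqrtr; apply: ler_sum => i _.
rewrite ler_sqr ?nnegrE ?nc_ge0 //; last by apply: sumr_ge0 => j _; exact: nc_ge0.
rewrite mxE; apply: le_trans (nc_sum _ _ _) _; apply: ler_sum => j _.
rewrite ncM -[X in _ <= X]mulr1; apply: ler_wpM2l; first exact: nc_ge0.
exact: le_trans (nc_le_vnorm _ _ _) hw.
Qed.

Lemma specnorm_le m n (A : 'M[C]_(m, n)) (v : 'cV[C]_n) :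
  vnorm (A *m v) <= specnorm A * vnorm v.
Proof.
have [h0|hn] := eqVneq (vnorm v) 0.
  by rewrite h0 mulr0 (vnorm_eq0 _ _ h0) mulmx0 vnorm0.
have hp : 0 < vnorm v by rewrite lt_def hn vnorm_ge0.
have hu : vnorm (((vnorm v)^-1)%:C *: v) <= 1.
  by rewrite vnormZ nc_real ger0_norm ?invr_ge0 ?vnorm_ge0 // mulVf.
have := specnorm_ub _ _ A _ hu.
rewrite -scalemxAr vnormZ nc_real ger0_norm ?invr_ge0 ?vnorm_ge0 //.
move=> h; rewrite mulrC -[vnorm (A *m v)](mulVKf hn); apply: ler_wpM2l => //; exact: vnorm_ge0.
Qed.

Lemma pythag L d (Di : 'M[C]_(L, d)) (r : 'cV[C]_L) :
  adjmx Di *m Di = 1%:M ->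
  vnorm2 (r - Di *m (adjmx Di *m r)) = vnorm2 r - vnorm2 (adjmx Di *m r).
Proof.
move=> hI; apply: (@complexI R); rewrite rmorphB /= !vnorm2C.
set w := adjmx Di *m r.
have e1 : adjmx r *m (Di *m w) = adjmx w *m w.
  by rewrite mulmxA /w adjmxM adjmxK.
have e2 : (adjmx w *m adjmx Di) *m r = adjmx w *m w by rewrite -mulmxA.
have e3 : (adjmx w *m adjmx Di) *m (Di *m w) = adjmx w *m w.
  by rewrite -mulmxA (mulmxA (adjmx Di)) hI mul1mx.
rewrite adjmxB adjmxM mulmxBl !mulmxBr e1 e2 e3.
by rewrite !mxE subrr subr0.
Qed.


Section Blocks.
Variables (M d : nat).
Hypothesis hd : (0 < d)%N.

Lemma divblk_proof (k : 'I_(M * d)) : (k %/ d < M)%N.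
Proof. by rewrite ltn_divLR // ltn_ord. Qed.
Lemma modblk_proof (k : 'I_(M * d)) : (k %% d < d)%N.
Proof. by rewrite ltn_pmod. Qed.

Lemma blk_sum (V : nmodType) (F : 'I_(M * d) -> V) :
  \sum_k F k = \sum_(l < M) \sum_(j < d) F (blk_idx l j).
Proof.
rewrite pair_big /=.
rewrite (reindex (fun p : 'I_M * 'I_d => blk_idx p.1 p.2)) //.
exists (fun k => (Ordinal (divblk_proof k), Ordinal (modblk_proof k))).
  move=> [l j] _ /=; congr (_, _); apply: val_inj => /=.
    by rewrite divnMDl // divn_small ?addn0.
  by rewrite modnMDl modn_small.
by move=> k _; apply: val_inj => /=; rewrite -divn_eq.
Qed.

End Blocks.


Lemma colblk_mul L M d (D : 'M[C]_(L, M * d)) (z : 'cV[C]_(M * d)) :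
  (0 < d)%N -> D *m z = \sum_l colblk D l *m vblk z l.
Proof.
move=> hd; apply/matrixP => i j; rewrite (ord1 j) summxE mxE (blk_sum _ _ hd).
apply: eq_bigr => l _; rewrite mxE; apply: eq_bigr => k _.
by rewrite !mxE.
Qed.


Section Est.
Variables (L M d k : nat) (D : 'M[C]_(L, M * d)) (c : R) (S : {set 'I_M}).
Hypothesis hI : forall l, adjmx (colblk D l) *m colblk D l = 1%:M.
Hypothesis hcoh : forall j t : 'I_M, j != t ->
  specnorm (adjmx (colblk D j) *m colblk D t) <= c.
Hypothesis hc : 0 <= c.
Hypothesis hS : (#|S| <= k)%N.
Variable zb : 'I_M -> 'cV[C]_d.
Hypothesis hz : forall t, t \notin S -> zb t = 0.

Local Notation Dc := (colblk D).
Let r := \sum_t Dc t *m zb t.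
Let a t := vnorm (zb t).
Let g j := vnorm (adjmx (Dc j) *m r).
Let m := \big[Num.max/0]_t a t.

Lemma a_ge0 t : 0 <= a t.
Proof. exact: vnorm_ge0. Qed.

Lemma a_out t : t \notin S -> a t = 0.
Proof. by move=> h; rewrite /a hz // vnorm0. Qed.

Lemma a_le_m t : a t <= m.
Proof. exact: le_bigmax. Qed.

Lemma m_ge0 : 0 <= m.
Proof. exact: bigmax_ge_id. Qed.

Lemma E1 j : vnorm (adjmx (Dc j) *m r - zb j) <= c * \sum_(t | t != j) a t.
Proof.
have -> : adjmx (Dc j) *m r - zb j = \sum_(t | t != j) (adjmx (Dc j) *m Dc t) *m zb t.
  rewrite /r mulmx_sumr (bigD1 j) //= mulmxA hI mul1mx addrAC subrr add0r.
  by apply: eq_bigr => t _; rewrite mulmxA.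
rewrite mulr_sumr; apply: le_trans (vnorm_sum _ _ _ _) _; apply: ler_sum => t ht.
apply: le_trans (specnorm_le _ _ _ _) _; rewrite /a; apply: ler_wpM2r.
  exact: vnorm_ge0.
by apply: hcoh; rewrite eq_sym.
Qed.

Lemma g_up j : g j <= a j + c * \sum_(t | t != j) a t.
Proof.
have h := vnormD _ (adjmx (Dc j) *m r - zb j) (zb j); rewrite subrK in h.
have := E1 j; rewrite /g /a; lra.
Qed.

Lemma g_low j : a j - c * \sum_(t | t != j) a t <= g j.
Proof.
have h := vnormB _ (adjmx (Dc j) *m r) (adjmx (Dc j) *m r - zb j).
have e : adjmx (Dc j) *m r - (adjmx (Dc j) *m r - zb j) = zb j.
  by rewrite opprB addrC subrK.
rewrite e in h; have := E1 j; rewrite /g /a; lra.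
Qed.

Lemma sum_out j : \sum_(t | t != j) a t = \sum_(t in S :\ j) a t.
Proof.
rewrite big_mkcond [RHS]big_mkcond; apply: eq_bigr => t _; rewrite in_setD1.
case: (t != j) => //=; case: (boolP (t \in S)) => //= ht.
exact: a_out.
Qed.

Lemma sum_bound j : \sum_(t | t != j) a t <= #|S :\ j|%:R * m.
Proof.
rewrite sum_out; apply: (@le_trans _ _ (\sum_(t in S :\ j) m)).
  by apply: ler_sum => t _; exact: a_le_m.
by rewrite sumr_const mulr_natl.
Qed.

Lemma sum_all : \sum_t a t <= k%:R * m.
Proof.
have -> : \sum_t a t = \sum_(t in S) a t.
  rewrite [RHS]big_mkcond; apply: eq_bigr => t _; case: ifP => // /negbT.
  exact: a_out.
apply: (@le_trans _ _ (\sum_(t in S) m)).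
  by apply: ler_sum => t _; exact: a_le_m.
rewrite sumr_const -[m *+ _]mulr_natl; apply: ler_wpM2r; first exact: m_ge0.
by rewrite ler_nat.
Qed.

Lemma card_in j : j \in S -> (#|S :\ j|%:R : R) <= k%:R - 1.
Proof.
move=> hj; have := cardsD1 j S; rewrite hj => h.
rewrite lerBrDr natr1 ler_nat; move: hS; rewrite h add1n; exact.
Qed.

Lemma card_all j : (#|S :\ j|%:R : R) <= k%:R.
Proof.
rewrite ler_nat; apply: leq_trans hS; apply: subset_leq_card; exact: subD1set.
Qed.

Lemma r_nz_m : r != 0 -> 0 < m /\ exists2 s, s \in S & a s = m.
Proof.
move=> hr.
have [t0 ht0] : exists t, zb t != 0.
  apply/existsP; apply: contraR hr; rewrite negb_exists => /forallP h.
  by rewrite /r big1 // => t _; move: (h t); rewrite negbK => /eqP ->; rewrite mulmx0.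
have hm : 0 < m.
  apply: lt_le_trans (a_le_m t0); rewrite lt_def a_ge0 andbT.
  by apply: contra ht0 => /eqP /vnorm_eq0 ->.
split => //.
have [s _ hs] := @eq_bigmax _ _ _ 0 t0 xpredT a isT (fun i _ => a_ge0 i).
exists s; last by rewrite /m hs.
by apply: contraLR hm => /a_out h; rewrite -leNgt /m hs h lexx.
Qed.

Lemma gs_low s : s \in S -> a s = m -> m - c * ((k%:R - 1) * m) <= g s.
Proof.
move=> hs hsm; have h1 := g_low s; rewrite hsm in h1.
have h2 : c * \sum_(t | t != s) a t <= c * ((k%:R - 1) * m).
  apply: ler_wpM2l => //; apply: le_trans (sum_bound s) _.
  apply: ler_wpM2r; [exact: m_ge0 | exact: card_in].
lra.
Qed.

Lemma select : r != 0 -> c * (2 * k%:R - 1) < 1 ->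
  forall j, j \notin S -> exists2 s, s \in S & g j < g s.
Proof.
move=> hr hc1 j hj; have [hm [s hs hsm]] := r_nz_m hr.
exists s => //; have h1 := gs_low _ hs hsm.
have h2 := g_up j; rewrite a_out // add0r in h2.
have h3 : c * \sum_(t | t != j) a t <= c * (k%:R * m).
  apply: ler_wpM2l => //; apply: le_trans (sum_bound j) _.
  apply: ler_wpM2r; [exact: m_ge0 | exact: card_all].
have h4 : 0 < m * (1 - c * (2 * k%:R - 1)).
  by apply: mulr_gt0 => //; rewrite subr_gt0.
have e : m - c * ((k%:R - 1) * m) - c * (k%:R * m) = m * (1 - c * (2 * k%:R - 1)).
  by ring.
apply: (ar1 h1 (le_trans h2 h3) e h4).
Qed.

Lemma decay i : (forall j, g j <= g i) -> c * (k%:R - 1) < 1 ->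
  vnorm2 r * (1 - (k%:R - 1) * c) <= k%:R * g i ^+ 2.
Proof.
move=> hi hc1.
have [r0|hr] := eqVneq r 0.
  by rewrite r0 vnorm2_0 mul0r mulr_ge0 ?ler0n ?sqr_ge0.
have [hm [s hs hsm]] := r_nz_m hr.
have h1 : vnorm2 r <= \sum_t g t * a t.
  have e : (vnorm2 r)%:C = \sum_t (adjmx (adjmx (Dc t) *m r) *m zb t) 0 0.
    rewrite vnorm2C {2}/r mulmx_sumr summxE; apply: eq_bigr => t _.
    by rewrite adjmxM adjmxK mulmxA.
  have -> : vnorm2 r = nc (vnorm2 r)%:C by rewrite nc_real ger0_norm // vnorm2_ge0.
  rewrite e; apply: le_trans (nc_sum _ _ _) _; apply: ler_sum => t _.
  exact: cplx_CS.
have h2 : \sum_t g t * a t <= g i * \sum_t a t.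
  rewrite mulr_sumr; apply: ler_sum => t _; apply: ler_wpM2r; [exact: a_ge0 | exact: hi].
have h3 := sum_all.
have hgi : 0 <= g i by exact: vnorm_ge0.
have h4 : g i * \sum_t a t <= g i * (k%:R * m) by apply: ler_wpM2l.
have h5 := gs_low _ hs hsm.
have h6 := hi s.
have hq : 0 <= 1 - (k%:R - 1) * c by rewrite mulrC subr_ge0 ltW.
have h7 : vnorm2 r * (1 - (k%:R - 1) * c) <= g i * (k%:R * m) * (1 - (k%:R - 1) * c).
  by apply: ler_wpM2r => //; apply: le_trans h1 (le_trans h2 h4).
have e1 : m * (1 - (k%:R - 1) * c) = m - c * ((k%:R - 1) * m) by ring.
have h8 : m * (1 - (k%:R - 1) * c) <= g i by rewrite e1; exact: le_trans h5 h6.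
have hk : 0 <= k%:R * g i :> R by rewrite mulr_ge0 ?ler0n.
have h9 : k%:R * g i * (m * (1 - (k%:R - 1) * c)) <= k%:R * g i * g i
  by apply: ler_wpM2l.
have e2 : g i * (k%:R * m) * (1 - (k%:R - 1) * c) =
  k%:R * g i * (m * (1 - (k%:R - 1) * c)) by ring.
have e3 : k%:R * g i * g i = k%:R * g i ^+ 2 by ring.
by apply: le_trans h7 _; rewrite e2 -e3.
Qed.

End Est.

End Lib.

Local Close Scope complex_scope.

Lemma ar2 (R : realFieldType) (K Dd iv : R) :
  K * Dd < (iv + Dd) / 2 -> (2 * K - 1) * Dd < iv.
Proof. move=> h; lra. Qed.

Lemma ar3 (R : realFieldType) (K q r2 w2 : R) :
  0 < K -> r2 * q <= K * w2 -> r2 - w2 <= (1 - q / K) * r2.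
Proof.
move=> hK h.
have h1 : r2 * q / K <= w2 by rewrite ler_pdivrMr // [w2 * K]mulrC.
have e : (1 - q / K) * r2 = r2 - r2 * q / K by ring.
rewrite e; lra.
Qed.

Lemma ar4 (R : realFieldType) (K q : R) : 1 <= K -> q <= 1 -> 0 <= 1 - q / K.
Proof.
move=> hK hq; rewrite subr_ge0 ler_pdivrMr ?mul1r; last by lra.
lra.
Qed.

Theorem theorem4 (R : realType) (Rb M d k : nat)
    (D : 'M[R[i]]_(Rb * d, M * d)) (x0 : 'cV[R[i]]_(M * d))
    (idx : nat -> 'I_M) (r : nat -> 'cV[R[i]]_(Rb * d)) :
  (0 < k)%N ->
  (forall l : 'I_M, adjmx (colblk D l) *m colblk D l = 1%:M) ->
  (forall g : 'cV[R[i]]_(M * d), g != 0 -> block_sparse (2 * k) g -> D *m g != 0) ->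
  block_sparse k x0 ->
  0 < block_coherence D ->
  (k * d)%:R < ((block_coherence D)^-1 + d%:R) / 2 ->
  BMP_run D (D *m x0) idx r ->
  (forall l : nat, (0 < l)%N -> r l.-1 != 0 -> 0 < vnorm (vblk x0 (idx l))) /\
  (forall l : nat,
     vnorm2 (r l) <=
       (1 - (1 - (k%:R - 1) * d%:R * block_coherence D) / k%:R) ^+ l
       * vnorm2 (r 0%N)).
Proof.
move=> hk hI _ hsp hmu hineq [h0 hrun].
set mu := block_coherence D in hmu hineq *.
have hd : (0 < d)%N.
  rewrite lt0n; apply/negP => /eqP d0.
  have hinv : (d%:R : R)^-1 = 0 by rewrite d0 invr0.
  move: hmu; apply/negP; rewrite -leNgt /mu /block_coherence.
  apply: bigmax_le => // l _; apply: bigmax_le => // t _.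
  by rewrite hinv mul0r.
set c := d%:R * mu.
have hdR : 0 < (d%:R : R) by rewrite ltr0n.
have hcoh : forall j t : 'I_M, j != t ->
    specnorm (adjmx (colblk D j) *m colblk D t) <= c.
  move=> j t hjt.
  have h1 : (d%:R)^-1 * specnorm (adjmx (colblk D j) *m colblk D t) <= mu.
    apply: le_trans (le_bigmax _ _ j).
    by apply: (le_bigmax_cond _ (P := fun r => r != j)); rewrite eq_sym.
  rewrite /c -[specnorm _](mulVKf (lt0r_neq0 hdR)).
  by apply: ler_wpM2l => //; exact: ltW.
pose S := [set l | vnorm (vblk x0 l) != 0].
have hS : (#|S| <= k)%N by rewrite cardsE.
have hc : 0 <= c by rewrite mulr_ge0 ?ler0n ?ltW.
have hc1 : c * (2 * k%:R - 1) < 1.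
  rewrite natrM in hineq; have h2 := ar2 _ _ _ _ hineq.
  rewrite -(ltr_pM2r hmu) mulVf ?lt0r_neq0 // in h2.
  have e : c * (2 * k%:R - 1) = (2 * k%:R - 1) * d%:R * mu by rewrite /c; ring.
  by rewrite e; apply: h2.
have core : forall l (zb : 'I_M -> 'cV[R[i]]_d),
    (forall t, t \notin S -> zb t = 0) ->
    r l.-1 = \sum_t colblk D t *m zb t -> (0 < l)%N -> r l.-1 != 0 ->
    idx l \in S.
  move=> l zb hz hr hl hrn; have [hmax _] := hrun l hl.
  case: (boolP (idx l \in S)) => // hout.
  rewrite hr in hrn hmax.
  have [s hs hlt] := @select R _ _ _ _ D c S hI hcoh hc hS zb hz hrn hc1 _ hout.
  by have := hmax s; rewrite leNgt hlt.
have inv : forall l, exists zb : 'I_M -> 'cV[R[i]]_d,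
    (forall t, t \notin S -> zb t = 0) /\ r l = \sum_t colblk D t *m zb t.
  elim => [|l [zb [hz hr]]].
    exists (vblk x0); split; last by rewrite h0; exact: colblk_mul.
    by move=> t; rewrite inE negbK => /eqP /vnorm_eq0.
  have [hmax hup] := hrun l.+1 isT; rewrite /= in hmax hup.
  have [r0|rn0] := eqVneq (r l) 0.
    exists (fun _ => 0); split => //.
    by rewrite hup r0 !mulmx0 subr0 big1 // => t _; rewrite mulmx0.
  set i := idx l.+1 in hmax hup *.
  have hiS : i \in S by apply: (core l.+1 zb hz hr).
  set w := adjmx (colblk D i) *m r l in hup *.
  exists (fun t => if t == i then zb t - w else zb t); split.
    move=> t ht; have : t != i by apply: contraNneq ht => ->.
    by move=> /negPf ->; exact: hz.
  rewrite hup hr (bigD1 i) //= [X in _ = X](bigD1 i) //= eqxx mulmxBr.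
  rewrite addrAC; congr (_ + _).
  by apply: eq_bigr => t /negPf ->.
split.
  move=> l hl hrn; have [zb [hz hr]] := inv l.-1.
  have := core l zb hz hr hl hrn; rewrite inE => hne.
  by rewrite lt_def hne vnorm_ge0.
have hk1 : (1 : R) <= k%:R by rewrite ler1n.
have hc2 : c * (k%:R - 1) < 1.
  apply: le_lt_trans hc1; apply: ler_wpM2l => //; lra.
have step : forall l, vnorm2 (r l.+1) <=
    (1 - (1 - (k%:R - 1) * d%:R * mu) / k%:R) * vnorm2 (r l).
  move=> l; have [hmax hup] := hrun l.+1 isT; rewrite /= in hmax hup.
  have [zb [hz hr]] := inv l.
  rewrite hup pythag //.
  rewrite hr in hmax.
  have hdec := @decay R _ _ _ _ D c S hI hcoh hc hS zb hz (idx l.+1) hmax hc2.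
  rewrite -hr vnorm_sq in hdec.
  apply: ar3; first by rewrite ltr0n.
  by rewrite -mulrA.
have hb : 0 <= 1 - (1 - (k%:R - 1) * d%:R * mu) / k%:R.
  apply: ar4 => //; rewrite gerBl; apply: mulr_ge0; last exact: ltW.
  by rewrite mulr_ge0 ?ler0n // subr_ge0.
elim => [|l IH]; first by rewrite expr0 mul1r.
rewrite exprS -mulrA; apply: le_trans (step l) _.
exact: ler_wpM2l.
Qed.

Print Assumptions theorem4.
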